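(* Let $d\ge1$ and let $P$ be a probability distribution on $\{0,1\}^d$ with $P(\nu)>0$ for all $\nu\in\{0,1\}^d$. For each $\omega\in\{0,1\}^d$, let $A_\omega$ be the $(2^d-1)\times d$ matrix with rows indexed by $\nu\in\{0,1\}^d\setminus\{\omega\}$ and entries $A_\omega(\nu,i)=1$ if $\nu_i\ne\omega_i$ and $0$ otherwise, let $b_\omega(\nu)=\ln(P(\nu)/P(\omega))$, let $\mathcal{Q}_\omega:=\{y\in\mathbb{R}^d\mid A_\omega y\le b_\omega\}$, and let $f_\omega(y):=\prod_{i=1}^d(1+e^{y_i})$. Then for each $\omega\in\{0,1\}^d$, the maximum $\max_{y\in\mathcal{Q}_\omega}f_\omega(y)$ can only be attained at a vertex of $\mathcal{Q}_\omega$.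
   Context: A vertex of $\mathcal{Q}_\omega$ is a point $y\in\mathcal{Q}_\omega$ such that $A'_\omega y=b'_\omega$ for some invertible $d\times d$ submatrix $A'_\omega$ of $A_\omega$ consisting of $d$ of its rows, with $b'_\omega$ the corresponding entries of $b_\omega$. (Via $y_i=(1-2\omega_i)\ln(q_i/(1-q_i))$, this polyhedron is the image of $\{q\in(0,1)^d: P(\omega)f_\omega(q)\le P(\nu)f_\nu(q)\ \forall\nu\}$, where $f_\omega(q)=\prod_i q_i^{-\omega_i}(1-q_i)^{\omega_i-1}$.) *)

(* Defs.v *)
From mathcomp Require Import all_boot all_order all_algebra.
From mathcomp Require Import all_classical all_reals all_analysis.
Set Implicit Arguments. Unset Strict Implicit. Unset Printing Implicit Defensive.
Import Order.TTheory GRing.Theory Num.Theory.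
Local Open Scope ring_scope.

(* {0,1}^d is represented by {ffun 'I_d -> bool}; nu i = true means nu_i = 1. *)
Notation cube d := {ffun 'I_d -> bool}.

Section Defs.
Variables (R : realType) (d : nat).

Definition full_support_prob (P : cube d -> R) : Prop :=
  (forall nu, 0 < P nu) /\ \sum_(nu : cube d) P nu = 1.

Definition A_ent (omega nu : cube d) (i : 'I_d) : R :=
  if nu i != omega i then 1 else 0.

Definition b_ent (P : cube d -> R) (omega nu : cube d) : R :=
  ln (P nu / P omega).

Definition A_row_y (omega nu : cube d) (y : 'cV[R]_d) : R :=
  \sum_(i < d) A_ent omega nu i * y i 0.

Definition Qpoly (P : cube d -> R) (omega : cube d) : set 'cV[R]_d :=
  [set y | forall nu, nu != omega -> A_row_y omega nu y <= b_ent P omega nu].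

Definition f_obj (y : 'cV[R]_d) : R := \prod_(i < d) (1 + expR (y i 0)).

Definition is_vertex (P : cube d -> R) (omega : cube d) (y : 'cV[R]_d) : Prop :=
  Qpoly P omega y /\
  exists s : 'I_d -> cube d,
    [/\ injective s, (forall k, s k != omega),
        (\matrix_(k < d, i < d) A_ent omega (s k) i) \in unitmx &
        forall k, A_row_y omega (s k) y = b_ent P omega (s k)].

End Defs.

(* Main.v *)
Require Import Defs.
From mathcomp Require Import all_boot all_order all_algebra.
From mathcomp Require Import all_classical all_reals all_analysis.
From mathcomp Require Import ring lra.
Import Order.TTheory GRing.Theory Num.Theory.
Local Open Scope ring_scope.

Section Aux.
Variables (R : realType) (d : nat).

Lemma A_row_lin (omega nu : cube d) (y v : 'cV[R]_d) (t : R) :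
  A_row_y omega nu (y + t *: v) = A_row_y omega nu y + t * A_row_y omega nu v.
Proof.
rewrite /A_row_y mulr_sumr -big_split /=; apply: eq_bigr => i _.
by rewrite !mxE mulrDr mulrCA.
Qed.

Lemma coord_ineq (a s : R) : s != 0 ->
  (1 + expR a) * (1 + expR a) < (1 + expR (a + s)) * (1 + expR (a - s)).
Proof.
move=> s0.
have ea : 0 < expR a by apply: expR_gt0.
set u := expR s; set w := expR (- s).
have u0 : 0 < u by apply: expR_gt0.
have w0 : 0 < w by apply: expR_gt0.
have uw : u * w = 1 by rewrite /u /w expRxMexpNx_1.
have u1 : u != 1.
  apply/eqP => h; move: s0; rewrite -(expR0 R) in h.
  by move/expR_inj: h => ->; rewrite eqxx.
have h1 : 0 < (u - 1) ^+ 2 * w.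
  by apply: mulr_gt0 => //; rewrite exprn_even_gt0 //= subr_eq0.
have key : 2 < u + w.
  have : (u - 1) ^+ 2 * w = u * (u * w) - 2 * (u * w) + w.
    by rewrite expr2; ring.
  rewrite uw => e; rewrite e in h1; lra.
rewrite expRD (expRD a (- s)) -/u -/w.
have : 0 < expR a * (u + w - 2) by apply: mulr_gt0 => //; lra.
have -> : (1 + expR a * u) * (1 + expR a * w) =
   1 + expR a * (u + w) + expR a * expR a * (u * w) by ring.
rewrite uw; nra.
Qed.

End Aux.

Theorem theorem1 (R : realType) (d : nat) (P : cube d -> R) :
  (1 <= d)%N -> full_support_prob P ->
  forall (omega : cube d) (y : 'cV[R]_d),
    Qpoly P omega y ->
    (forall z : 'cV[R]_d, Qpoly P omega z -> f_obj z <= f_obj y) ->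
    is_vertex P omega y.
Proof.
move=> _ _ omega y Qy ymax; split => //.
pose tight (nu : cube d) :=
  (nu != omega) && (A_row_y omega nu y == b_ent P omega nu).
pose N := #|{: cube d}|.
pose B : 'M[R]_(N, d) := \matrix_(k, i)
  (if tight (enum_val k) then A_ent R omega (enum_val k) i else 0).
have [HB|HB] := boolP (row_full B).
  pose f := fullrankfun HB.
  have Hu := fullrowsub_unit HB.
  have Ht : forall k, tight (enum_val (f k)).
    move=> k; apply/negPn/negP => nt.
    have : delta_mx (0 : 'I_1) k *m rowsub f B = 0 :> 'M[R]_(1, d).
      apply/matrixP => a j; rewrite -rowE !mxE /= (negbTE nt).
      by [].
    move=> /(congr1 (fun M => M *m invmx (rowsub f B))).
    rewrite mulmxK // mul0mx => /matrixP /(_ 0 k).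
    by rewrite !mxE !eqxx /= => /eqP; rewrite oner_eq0.
  exists (fun k => enum_val (f k)); split.
  - by move=> a b /enum_val_inj /fullrankfun_inj.
  - by move=> k; case/andP: (Ht k).
  - suff -> : (\matrix_(k < d, i < d) A_ent R omega (enum_val (f k)) i)
        = rowsub f B by [].
    by apply/matrixP => a j; rewrite !mxE Ht.
  - by move=> k; case/andP: (Ht k) => _ /eqP.
exfalso.
have : cokermx B != 0 by rewrite cokermx_eq0.
case/matrix0Pn => i0 [j0 Hij].
pose v : 'cV[R]_d := col j0 (cokermx B).
have v0 : v i0 0 != 0 by rewrite /v mxE.
have Bv : forall nu, tight nu -> A_row_y omega nu v = 0.
  move=> nu tnu.
  have := congr1 (fun M : 'M[R]_(N, d) => M (enum_rank nu) j0) (mulmx_coker B).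
  rewrite !mxE /= => <-; rewrite /A_row_y; apply: eq_bigr => i _.
  by rewrite !mxE enum_rankK tnu.
clearbody v.
have Hnear : \forall t \near at_right (0:R), forall nu : cube d,
    (0 < t) /\ (nu != omega -> A_row_y omega nu y + t * A_row_y omega nu v
        <= b_ent P omega nu /\
      A_row_y omega nu y + (- t) * A_row_y omega nu v <= b_ent P omega nu).
  apply: filter_forall => nu.
  have [tnu|ntnu] := boolP (tight nu).
    near=> t; split; first by near: t; exact: nbhs_right_gt.
    move=> _; rewrite Bv // !mulr0 !addr0.
    by case/andP: tnu => _ /eqP ->; split.
  set c := A_row_y omega nu v.
  have [nuo|nuo] := boolP (nu == omega).
    near=> t; split; first by near: t; exact: nbhs_right_gt.
    by [].
  have Hle := Qy nu nuo.
  have Hlt : A_row_y omega nu y < b_ent P omega nu.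
    rewrite lt_neqAle Hle andbT; apply: contra ntnu => h.
    by rewrite /tight nuo h.
  set s := b_ent P omega nu - A_row_y omega nu y.
  have s0 : 0 < s by rewrite subr_gt0.
  have e0 : 0 < s / (`|c| + 1) by apply: divr_gt0 => //; rewrite ltr_wpDl.
  near=> t.
  have tpos : 0 < t by near: t; exact: nbhs_right_gt.
  have tlt : t < s / (`|c| + 1) by near: t; exact: nbhs_right_lt.
  have c1 : 0 < `|c| + 1 by rewrite ltr_wpDl.
  have tlt' : t * `|c| + t < s.
    by rewrite -[X in _ + X]mulr1 -mulrDr -ltr_pdivlMr.
  split => //; move=> _.
  have n1 := ler_norm c; have n2 := ler_norm (- c); rewrite normrN in n2.
  have h1 : t * c <= t * `|c| by nra.
  have h2 : - (t * c) <= t * `|c| by nra.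
  rewrite mulNr; split; rewrite /s in tlt'; lra.
have [t Ht] := filter_ex Hnear.
have tpos : 0 < t by case: (Ht omega).
have Qp : Qpoly P omega (y + t *: v).
  by move=> nu nuo; rewrite A_row_lin; case: (Ht nu) => _ /(_ nuo) [].
have Qm : Qpoly P omega (y + (- t) *: v).
  by move=> nu nuo; rewrite A_row_lin; case: (Ht nu) => _ /(_ nuo) [].
have fpos : forall z : 'cV[R]_d, 0 < f_obj z.
  move=> z; rewrite /f_obj; apply: prodr_gt0 => i _.
  by apply: addr_gt0 => //; exact: expR_gt0.
have H1 := ymax _ Qp; have H2 := ymax _ Qm.
have Hle : f_obj (y + t *: v) * f_obj (y + (- t) *: v) <= f_obj y * f_obj y.
  by apply: ler_pM => //; apply: ltW; apply: fpos.
have Hlt : f_obj y * f_obj y < f_obj (y + t *: v) * f_obj (y + (- t) *: v).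
  rewrite /f_obj -!big_split /= (bigD1 i0) //= [X in _ < X](bigD1 i0) //=.
  set E1 := fun i : 'I_d => (1 + expR (y i 0)) * (1 + expR (y i 0)).
  set E2 := fun i : 'I_d => (1 + expR ((y + t *: v) i 0)) *
                           (1 + expR ((y + (- t) *: v) i 0)).
  have E1pos : forall i, 0 < E1 i.
    by move=> i; rewrite /E1; apply: mulr_gt0; apply: addr_gt0 => //; exact: expR_gt0.
  have E2pos : forall i, 0 < E2 i.
    by move=> i; rewrite /E2; apply: mulr_gt0; apply: addr_gt0 => //; exact: expR_gt0.
  have E12 : forall i, v i 0 != 0 -> E1 i < E2 i.
    move=> i vi; rewrite /E1 /E2 !mxE mulNr.
    by apply: coord_ineq; rewrite mulf_neq0 // gt_eqF.
  have E12w : forall i, E1 i <= E2 i.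
    move=> i; have [vi|vi] := eqVneq (v i 0) 0; last exact/ltW/E12.
    by rewrite /E1 /E2 !mxE vi !mulr0 !addr0.
  apply: (@lt_le_trans _ _ (E2 i0 * \prod_(i < d | i != i0) E1 i)).
    by rewrite ltr_pM2r ?E12 //; apply: prodr_gt0 => i _; exact: E1pos.
  rewrite ler_pM2l //; apply: ler_prod => i _.
  by rewrite ltW ?E1pos ?E12w.
by move: (lt_le_trans Hlt Hle); rewrite ltxx.
Unshelve. all: by end_near.
Qed.
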